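(* For every integer $n\ge 0$, \[ \left(\frac23\right)^n p_n\!\left(\frac14\right) = \sum_{k=0}^n B_{n-k}^{(-k)}. \]
   Context: Define polynomial sequences $(p_k(x))_{k\ge -1}$ and $(q_k(x))_{k\ge -1}$ by $p_{-1}(x)=0$, $q_{-1}(x)=1$ and, for $k\ge -1$, $p_{k+1}(x) = 2(kx+1)p_k(x) + 2x(1-x)p_k'(x) + q_k(x)$, $q_{k+1}(x) = (2(k+1)x+1)q_k(x) + 2x(1-x)q_k'(x)$. For an integer $k$, $\mathrm{Li}_k(z)=\sum_{m\ge1} z^m/m^k$. The poly-Bernoulli numbers $B_n^{(k)}\in\mathbb{Q}$ are defined by $\sum_{n\ge0} B_n^{(k)} \frac{t^n}{n!} = \frac{\mathrm{Li}_k(1-e^{-t})}{1-e^{-t}}$. *)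

(* Defs.v *)
From HB Require Import structures.
From mathcomp Require Import all_boot all_order all_algebra.
Set Implicit Arguments. Unset Strict Implicit. Unset Printing Implicit Defensive.
Import Order.TTheory GRing.Theory Num.Theory.
Local Open Scope ring_scope.

(* The pair (p_{j-1}, q_{j-1}) for j : nat, i.e. PQ j is indexed with a shift by one:
   PQ 0 = (p_{-1}, q_{-1}) = (0, 1), and PQ (j+1) is obtained from PQ j by the
   recurrence with k = j - 1. *)
Fixpoint PQ (j : nat) : {poly rat} * {poly rat} :=
  match j with
  | 0 => (0, 1)
  | j'.+1 =>
      let pk := (PQ j').1 in
      let qk := (PQ j').2 in
      let k : rat := ((Posz j') - 1)%:~R in
      (2%:P * (k *: 'X + 1) * pk + 2%:P * 'X * (1 - 'X) * pk^`() + qk,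
       (2%:P * ((k + 1) *: 'X) + 1) * qk + 2%:P * 'X * (1 - 'X) * qk^`())
  end.

Definition pol_p (n : nat) : {poly rat} := (PQ n.+1).1.
Definition pol_q (n : nat) : {poly rat} := (PQ n.+1).2.

(* Truncation to degree <= n of the formal power series 1 - e^{-t}
   = - sum_{j>=1} (-t)^j / j!. *)
Definition one_minus_exp_neg (n : nat) : {poly rat} :=
  - \sum_(1 <= j < n.+1) (((-1) ^+ j) / (j`!)%:R) *: 'X^j.

(* Poly-Bernoulli numbers: B_n^{(k)} = n! [t^n] Li_k(1-e^{-t})/(1-e^{-t})
   = n! [t^n] sum_{m>=1} (1-e^{-t})^{m-1} / m^k.  Since (1-e^{-t})^{m-1}
   has order m-1, only m <= n+1 contribute, and the coefficient of t^n
   only depends on 1-e^{-t} modulo t^{n+1}. *)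
Definition polyBernoulli (n : nat) (k : int) : rat :=
  (n`!)%:R * \sum_(1 <= m < n.+2)
     ((one_minus_exp_neg n) ^+ m.-1)`_n * ((m%:R : rat) ^ (- k)).

(* Main.v *)
Require Import Defs.
From mathcomp Require Import all_boot all_order all_algebra.
From mathcomp Require Import ring lra zify.
Import GRing.Theory Num.Theory.
Local Open Scope ring_scope.
Set Implicit Arguments. Unset Strict Implicit.

Section TOp.
Variable R : comNzRingType.

Definition T (a : R) (f : nat -> R) (n : nat) : R :=
  \sum_(i < n.+1) ('C(n, i))%:R * a ^+ (n - i) * f i.

Lemma T_ext a f g n : (forall i, (i <= n)%N -> f i = g i) -> T a f n = T a g n.
Proof. move=> H; apply: eq_bigr => i _; rewrite H //; exact: (ltn_ord i). Qed.

Lemma T_add a f g n : T a (fun i => f i + g i) n = T a f n + T a g n.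
Proof. rewrite /T -big_split /=; apply: eq_bigr => i _; ring. Qed.

Lemma T_scale a c f n : T a (fun i => c * f i) n = c * T a f n.
Proof. rewrite /T mulr_sumr; apply: eq_bigr => i _; ring. Qed.

Lemma T_sub a f g n : T a (fun i => f i - g i) n = T a f n - T a g n.
Proof. rewrite /T -sumrB /=; apply: eq_bigr => i _; ring. Qed.

Lemma T_sum a (B : nat) F n :
  T a (fun i => \sum_(m < B) F i m) n = \sum_(m < B) T a (fun i => F i m) n.
Proof.
rewrite /T (exchange_big) /=; apply: eq_bigr => i _; rewrite mulr_sumr //.
Qed.

Lemma T_0n a f : T a f 0 = f 0.
Proof. by rewrite /T big_ord_recl big_ord0 addr0 /= expr0 !mul1r. Qed.

Lemma TS a f n : T a f n.+1 = a * T a f n + T a (fun i => f i.+1) n.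
rewrite /T big_ord_recl /= bin0 subn0 mul1r.
rewrite (eq_bigr (fun i : 'I_n.+1 => ('C(n, i.+1))%:R * a ^+ (n - i) * f i.+1
     + ('C(n, i))%:R * a ^+ (n - i) * f i.+1)); last first.
  move=> i _; rewrite /bump /= add1n binS natrD subSS; ring.
rewrite big_split /= addrA; congr (_ + _).
rewrite mulr_sumr [RHS]big_ord_recl /= bin0 subn0 mul1r exprS mulrA.
congr (_ + _).
rewrite big_ord_recr /= bin_small // mul0r mul0r addr0.
apply: eq_bigr => i _; rewrite /bump /= add1n.
have h : (n - i = (n - i.+1).+1)%N by rewrite subnS prednK // subn_gt0.
rewrite h exprS; ring.
Qed.

Lemma T0 f n : T 0 f n = f n.
Proof.
rewrite /T big_ord_recr /= subnn binn expr0 !mul1r big1 ?add0r // => i _.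
by rewrite expr0n subn_eq0 leqNgt ltn_ord /= mulr0 mul0r.
Qed.

Lemma Tcomp a b f n : T a (T b f) n = T (a + b) f n.
Proof.
elim: n f => [|n IH] f; first by rewrite !T_0n.
rewrite TS.
have -> : T a (fun i => T b f i.+1) n =
   T a (fun i => b * T b f i + T b (fun j => f j.+1) i) n.
  by apply: T_ext => i _; rewrite TS.
by rewrite T_add T_scale !IH TS; ring.
Qed.

Lemma Tgeom a r n : T a (fun i => r ^+ i) n = (a + r) ^+ n.
Proof.
rewrite exprDn /T; apply: eq_bigr => i _; rewrite mulr_natl; ring.
Qed.

Lemma Tdelta a n : T a (fun i => (i == 0)%:R) n = a ^+ n.
Proof.
rewrite /T big_ord_recl /= bin0 subn0 mul1r mulr1 big1 ?addr0 // => i _.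
by rewrite mulr0.
Qed.

End TOp.
Arguments T {R} a f n.


Definition Pp j := (PQ j).1.
Definition Qp j := (PQ j).2.
Definition Lop (p : {poly rat}) : {poly rat} := 2 * 'X * (1 - 'X) * p^`().
Definition beta : {poly rat} := 2 * (1 - 'X).

Lemma polyC2 : (2%:P : {poly rat}) = 2.
Proof. by rewrite polyC_natr. Qed.

Lemma Qrec j : Qp j.+1 = (2 * j%:R * 'X + 1) * Qp j + Lop (Qp j).
Proof.
rewrite /Qp /Lop /= intrB subrK -mul_polyC polyC2.
have -> : ((j%:~R : rat))%:P = j%:R by rewrite -polyC_natr.
ring.
Qed.

Lemma Prec j : Pp j.+1 = (2 * (j%:R - 1) * 'X + 2) * Pp j + Lop (Pp j) + Qp j.
Proof.
rewrite /Pp /Qp /Lop /= intrB -mul_polyC polyC2 rmorphB /= rmorph1.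
have -> : ((j%:~R : rat))%:P = j%:R by rewrite -polyC_natr.
ring.
Qed.

Lemma deriv_nat n : ((n%:R : {poly rat}))^`() = 0.
Proof. by rewrite -polyC_natr derivC. Qed.

Lemma deriv_one : ((1 : {poly rat}))^`() = 0.
Proof. by rewrite -polyC1 derivC. Qed.

Lemma derivbeta : beta^`() = -2.
Proof.
rewrite /beta derivM derivB deriv_one derivX deriv_nat; ring.
Qed.

Lemma Ladd (p q : {poly rat}) : Lop (p + q) = Lop p + Lop q.
Proof. by rewrite /Lop derivD; ring. Qed.

Lemma Lnat (c : nat) (p : {poly rat}) : Lop (c%:R * p) = c%:R * Lop p.
Proof. by rewrite /Lop derivM deriv_nat; ring. Qed.

Lemma Lop0 : Lop 0 = 0.
Proof. by rewrite /Lop -polyC0 derivC mulr0. Qed.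

Lemma Lsum m (F : 'I_m -> {poly rat}) :
  Lop (\sum_(i < m) F i) = \sum_(i < m) Lop (F i).
Proof. exact: (big_morph Lop Ladd Lop0). Qed.

Lemma L1mx (F : {poly rat}) : Lop ((1 - 'X) * F) = - 2 * 'X * (1 - 'X) * F + (1 - 'X) * Lop F.
Proof.
rewrite /Lop derivM derivB deriv_one derivX; ring.
Qed.

Lemma LXb r (F : {poly rat}) : Lop ('X * beta ^+ r * F) =
  'X * beta ^+ r.+1 * F - 2 * r%:R * 'X * 'X * beta ^+ r * F + 'X * beta ^+ r * Lop F.
Proof.
rewrite /Lop !derivM derivX.
case: r => [|r].
  rewrite expr0 deriv_one /beta; ring.
rewrite deriv_exp derivbeta /= -mulr_natr !exprS /beta; ring.
Qed.

Lemma Lbeta n : Lop ((1 - 'X) * beta ^+ n) = - (n.+1%:R * 'X * beta ^+ n.+1).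
Proof.
rewrite /Lop derivM derivB deriv_one derivX.
case: n => [|n].
  rewrite expr0 deriv_one /beta; ring.
rewrite deriv_exp derivbeta /= -mulr_natr !exprS /beta; ring.
Qed.

Lemma Nterm n i (d e F F2 : {poly rat}) : (i <= n)%N ->
  Lop F = F2 - (2 * (i%:R + d) * 'X + e) * F ->
  (2 * (n%:R + d) * 'X + e) * ('X * beta ^+ (n - i) * F) + Lop ('X * beta ^+ (n - i) * F)
  = 'X * beta ^+ (n - i).+1 * F + 'X * beta ^+ (n - i) * F2.
Proof.
move=> hin H; rewrite LXb H natrB //; ring.
Qed.

Lemma Tpart n (g G2 : nat -> {poly rat}) (d e : {poly rat}) :
  (forall i, (i <= n)%N -> Lop (g i) = G2 i - (2 * (i%:R + d) * 'X + e) * g i) ->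
  (2 * (n%:R + d) * 'X + e) * ('X * T beta g n) + Lop ('X * T beta g n)
   = 'X * (beta * T beta g n + T beta G2 n).
Proof.
move=> H.
have E : 'X * T beta g n = \sum_(i < n.+1) ('C(n, i))%:R * ('X * beta ^+ (n - i) * g i).
  by rewrite /T mulr_sumr; apply: eq_bigr => i _; ring.
rewrite E Lsum mulr_sumr -big_split /=.
rewrite /T mulr_sumr -big_split mulr_sumr /=.
apply: eq_bigr => i _.
have hin : (i <= n)%N by rewrite -ltnS.
have N := @Nterm n i d e (g i) (G2 i) hin (H i hin).
rewrite Lnat.
apply: (@eq_trans _ _ (('C(n,i))%:R * ((2 * (n%:R + d) * 'X + e) *
   ('X * beta ^+ (n - i) * g i) + Lop ('X * beta ^+ (n - i) * g i)))).
  ring.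
rewrite N exprS; ring.
Qed.

Lemma Q0 : Qp 0 = 1. Proof. by []. Qed.
Lemma P0 : Pp 0 = 0. Proof. by []. Qed.
Lemma Lone : Lop 1 = 0.
Proof. by rewrite /Lop deriv_one mulr0. Qed.
Lemma natS (n : nat) : (n.+1%:R : {poly rat}) = n%:R + 1.
Proof. by rewrite -addn1 natrD. Qed.

Lemma Kid n : Qp n.+1 = (1 - 'X) * Qp n + 'X * T beta (fun i => Qp i.+1) n.
Proof.
elim: n => [|n IH].
  rewrite T_0n Qrec Q0 Lone; ring.
have H1 : Qp n.+2 = (2 * n.+1%:R * 'X + 1) *
   ((1 - 'X) * Qp n + 'X * T beta (fun i => Qp i.+1) n) +
   Lop ((1 - 'X) * Qp n + 'X * T beta (fun i => Qp i.+1) n).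
  by rewrite Qrec -IH.
have Hyp : forall i, (i <= n)%N -> Lop ((fun i => Qp i.+1) i) =
    (fun i => Qp i.+2) i - (2 * (i%:R + 1) * 'X + 1) * (fun i => Qp i.+1) i.
  move=> i _ /=; rewrite (Qrec i.+1) natS; ring.
have TP := @Tpart n (fun i => Qp i.+1) (fun i => Qp i.+2) 1 1 Hyp.
have TP' : Lop ('X * T beta (fun i => Qp i.+1) n) =
   'X * (beta * T beta (fun i => Qp i.+1) n + T beta (fun i => Qp i.+2) n)
   - (2 * (n%:R + 1) * 'X + 1) * ('X * T beta (fun i => Qp i.+1) n).
  by rewrite -TP; ring.
have LQn : Lop (Qp n) = Qp n.+1 - (2 * n%:R * 'X + 1) * Qp n.
  by rewrite (Qrec n); ring.
rewrite H1 Ladd L1mx TP' LQn TS natS /=; ring.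
Qed.

Lemma Qid n : Pp n.+1 = (1 - 'X) * Pp n + 'X * T beta (fun i => Pp i.+1) n
   + (1 - 'X) * beta ^+ n.
Proof.
elim: n => [|n IH].
  rewrite T_0n Prec P0 Q0 Lop0 expr0; ring.
have H1 : Pp n.+2 = (2 * n%:R * 'X + 2) *
   ((1 - 'X) * Pp n + 'X * T beta (fun i => Pp i.+1) n + (1 - 'X) * beta ^+ n) +
   Lop ((1 - 'X) * Pp n + 'X * T beta (fun i => Pp i.+1) n + (1 - 'X) * beta ^+ n)
   + Qp n.+1.
  by rewrite Prec -IH (natS n) addrK.
have Hyp : forall i, (i <= n)%N -> Lop ((fun i => Pp i.+1) i) =
    (fun i => Pp i.+2 - Qp i.+1) i - (2 * (i%:R + 0) * 'X + 2) * (fun i => Pp i.+1) i.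
  move=> i _ /=; rewrite (Prec i.+1) natS; ring.
have TP := @Tpart n (fun i => Pp i.+1) (fun i => Pp i.+2 - Qp i.+1) 0 2 Hyp.
have TP' : Lop ('X * T beta (fun i => Pp i.+1) n) =
   'X * (beta * T beta (fun i => Pp i.+1) n + T beta (fun i => Pp i.+2 - Qp i.+1) n)
   - (2 * (n%:R + 0) * 'X + 2) * ('X * T beta (fun i => Pp i.+1) n).
  by rewrite -TP; ring.
have LPn : Lop (Pp n) = Pp n.+1 - (2 * (n%:R - 1) * 'X + 2) * Pp n - Qp n.
  by rewrite (Prec n); ring.
rewrite H1 !Ladd L1mx Lbeta TP' LPn T_sub (Kid n) TS /= exprS /beta; ring.
Qed.

Lemma hornat (n : nat) (x : rat) : ((n%:R : {poly rat})).[x] = n%:R.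
Proof. by rewrite -polyC_natr hornerC. Qed.

Lemma horner_one (x : rat) : (1 : {poly rat}).[x] = 1.
Proof. by rewrite -polyC1 hornerC. Qed.

Lemma hT (g : nat -> {poly rat}) n (x : rat) :
  (T beta g n).[x] = T (beta.[x]) (fun i => (g i).[x]) n.
Proof.
rewrite /T horner_sum; apply: eq_bigr => i _.
by rewrite !hornerM hornat horner_exp /beta hornerM.
Qed.

Lemma T_geo (c a : rat) f n :
  c ^+ n * T a f n = T (c * a) (fun i => c ^+ i * f i) n.
Proof.
rewrite /T mulr_sumr; apply: eq_bigr => i _.
have hi : (i <= n)%N by rewrite -ltnS.
rewrite -{1}(subnKC hi) exprD exprMn; ring.
Qed.

Definition tA n : rat := (2/3) ^+ n * (Pp n.+1).[1/4].

Lemma tA_rec n :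
  4 * tA n = (if n is m.+1 then 2 * tA m else 0) + T 1 tA n + 3.
Proof.
rewrite /tA; move: (Qid n); generalize (Pp n.+1) => Pn1 E0.
have E : Pn1.[1/4] = ((1 - 'X) * Pp n + 'X * T beta (fun i => Pp i.+1) n
   + (1 - 'X) * beta ^+ n).[1/4] by rewrite E0.
rewrite !hornerD !hornerM hT !hornerD hornerX horner_exp hornerN hornerX horner_one in E.
have hb : beta.[1/4] = 3/2.
  by rewrite /beta hornerM hornat hornerD hornerN hornerX horner_one.
rewrite hb in E.
rewrite E.
have H : T 1 (fun i => (2/3 : rat) ^+ i * (Pp i.+1).[1 / 4]) n =
   (2/3) ^+ n * T (3 / 2) (fun i => (Pp i.+1).[1 / 4]) n.
  rewrite T_geo.
  have -> : (2 / 3 * (3 / 2) : rat) = 1 by rewrite mulf_div mulrC divff.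
  by [].
rewrite H.
case: n E0 E H => [|m] E0 E H.
  by rewrite P0 horner0 expr0; field.
have e32 : (3/2 : rat) ^+ m.+1 = ((2/3) ^+ m.+1)^-1 by rewrite -exprVn invf_div.
rewrite e32 (exprS _ m).
field; by apply: expf_neq0.
Qed.


Notation omen := one_minus_exp_neg.

Lemma coef_omen N k : (omen N)`_k =
  if (0 < k <= N)%N then - ((-1) ^+ k / (k`!)%:R) else 0.
Proof.
elim: N => [|N IH].
  rewrite /one_minus_exp_neg big_geq // oppr0 coef0.
  by have -> : (0 < k <= 0)%N = false by case: k.
rewrite /one_minus_exp_neg big_nat_recr //= opprD coefD -/(one_minus_exp_neg N).
rewrite IH coefN coefZ coefXn.
case: (eqVneq k N.+1) => [->|hk].
  by rewrite ltnn andbF /= leqnn mulr1 add0r.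
rewrite mulr0 oppr0 addr0.
by rewrite [(k <= N.+1)%N]leq_eqVlt (negbTE hk) /= ltnS.
Qed.

Definition agree (i : nat) (p q : {poly rat}) := forall k, (k <= i)%N -> p`_k = q`_k.

Lemma agreeM i p p' q q' : agree i p p' -> agree i q q' -> agree i (p * q) (p' * q').
Proof.
move=> hp hq k hk; rewrite !coefM; apply: eq_bigr => j _.
have hj : (j <= i)%N by apply: leq_trans hk; rewrite -ltnS.
rewrite hp // hq //; apply: leq_trans hk; exact: leq_subr.
Qed.

Lemma agreeX i p q m : agree i p q -> agree i (p ^+ m) (q ^+ m).
Proof.
move=> h; elim: m => [|m IH]; first by move=> k _.
by rewrite !exprS; apply: agreeM.
Qed.

Lemma agree_omen i N : (i <= N)%N -> agree i (omen N) (omen i).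
Proof.
move=> hiN k hk; rewrite !coef_omen hk andbT.
by rewrite (leq_trans hk hiN) andbT.
Qed.

Lemma coef_pow_low (p : {poly rat}) m k : p`_0 = 0 -> (k < m)%N -> (p ^+ m)`_k = 0.
Proof.
move=> p0; elim: m k => [|m IH] k //.
move=> hk; rewrite exprS coefMr big1 // => j _.
case: (ltnP j m) => hj; first by rewrite IH // mulr0.
have hjk : (j <= k)%N by rewrite -ltnS.
have ejk : nat_of_ord j = k by apply/eqP; rewrite eqn_leq hjk -ltnS (leq_trans hk).
by rewrite ejk subnn p0 mul0r.
Qed.

Definition u (j m : nat) : rat := (j`!)%:R * ((omen j) ^+ m)`_j.

Lemma u_indep j N m : (j <= N)%N -> u j m = (j`!)%:R * ((omen N) ^+ m)`_j.
Proof.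
by move=> h; rewrite /u (agreeX m (agree_omen h)).
Qed.

Lemma omen0 N : (omen N)`_0 = 0.
Proof. by rewrite coef_omen. Qed.

Lemma u_big j m : (j < m)%N -> u j m = 0.
Proof. by move=> h; rewrite /u coef_pow_low ?mulr0 // omen0. Qed.

Lemma u_0 j : u j 0 = (j == 0%N)%:R.
Proof. by rewrite /u expr0 coef1; case: j => [|j] //=; rewrite mulr0. Qed.

Lemma coef_1momen N l : (l <= N)%N -> (1 - omen N)`_l = (-1) ^+ l / (l`!)%:R.
Proof.
move=> hl; rewrite coefB coef1 coef_omen hl andbT.
case: l hl => [|l] hl /=; first by rewrite expr0 divr1 subr0.
by rewrite sub0r opprK.
Qed.

Lemma fact_neq0 n : ((n`!)%:R : rat) != 0.
Proof. by rewrite pnatr_eq0 -lt0n fact_gt0. Qed.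

Lemma U2 j m : T (-1) (fun i => u i m) j = u j m - u j m.+1.
Proof.
have E : u j m - u j m.+1 = (j`!)%:R * ((omen j ^+ m) * (1 - omen j))`_j.
  by rewrite /u mulrBr mulr1 exprSr coefB mulrBr.
rewrite E coefM mulr_sumr /T; apply: eq_bigr => i _.
have hi : (i <= j)%N by rewrite -ltnS.
rewrite (u_indep m hi) coef_1momen ?leq_subr //.
have F : ((j`!)%:R : rat) = ('C(j,i))%:R * (i`!)%:R * ((j-i)`!)%:R.
  by rewrite -!natrM -mulnA bin_fact.
rewrite F; field.
exact: fact_neq0.
Qed.

Lemma agree_deriv j : agree j ((omen j.+1)^`()) (1 - omen j.+1).
Proof.
move=> l hl; rewrite coef_deriv coef_1momen; last by rewrite (leq_trans hl).
rewrite coef_omen /= ltnS hl factS natrM exprS -mulr_natr.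
have h1 := fact_neq0 l.
have h2 : (l.+1%:R : rat) != 0 by rewrite pnatr_eq0.
field; by rewrite h1 -mulrS pnatr_eq0.
Qed.

Lemma U4 j m : u j.+1 m = m%:R * (u j m.-1 - u j m).
Proof.
case: m => [|m]; first by rewrite !u_0 mul0r.
rewrite /= (u_indep m (leqnSn j)) (u_indep m.+1 (leqnSn j)) /u.
set w := omen j.+1.
have D : ((w ^+ m.+1)^`())`_j = (w ^+ m.+1)`_j.+1 *+ j.+1 by rewrite coef_deriv.
have D2 : ((w ^+ m.+1)^`())`_j = m.+1%:R * ((w ^+ m)`_j - (w ^+ m.+1)`_j).
  rewrite deriv_exp /= coefMn -mulr_natl.
  have Ar : agree j (w ^+ m) (w ^+ m) by [].
  rewrite (agreeM (@agree_deriv j) Ar (leqnn j)).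
  by rewrite mulrBl mul1r -exprS coefB mulr1 mulr_natl.
rewrite factS natrM.
have E2 : (j.+1%:R * (w ^+ m.+1)`_j.+1 : rat) = m.+1%:R * ((w ^+ m)`_j - (w ^+ m.+1)`_j).
  by rewrite mulr_natl -D D2.
apply: (@eq_trans _ _ ((j`!)%:R * (j.+1%:R * (w ^+ m.+1)`_j.+1))); first ring.
rewrite E2; ring.
Qed.


Definition b (j k : nat) : rat := \sum_(m < j.+1) u j m * (m.+1)%:R ^+ k.

Lemma sum_widen0 n B (F : nat -> rat) : (n <= B)%N ->
  (forall m, (n <= m)%N -> F m = 0) -> \sum_(m < n) F m = \sum_(m < B) F m.
Proof.
move=> hn H; rewrite (big_ord_widen B F hn) big_mkcond /=; apply: eq_bigr => i _.
by case: ifP => // /negbT; rewrite -leqNgt => hi; rewrite H.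
Qed.

Lemma b_ext j k B : (j.+1 <= B)%N -> b j k = \sum_(m < B) u j m * (m.+1)%:R ^+ k.
Proof.
move=> h; rewrite /b (sum_widen0 (F := fun m => u j m * (m.+1)%:R ^+ k) h) //.
by move=> m hm; rewrite u_big ?mul0r.
Qed.

Lemma b0k k : b 0 k = 1.
Proof. by rewrite /b big_ord_recl big_ord0 u_0 expr1n mulr1 addr0. Qed.

Lemma Tm1_b0 n : T (-1) (fun i => b i 0) n = (n == 0%N)%:R.
Proof.
rewrite (@T_ext _ _ _ (fun i => \sum_(m < n.+1) u i m)); last first.
  move=> i hi; rewrite (@b_ext _ _ n.+1) ?ltnS //.
  by apply: eq_bigr => m _; rewrite expr0 mulr1.
rewrite T_sum (eq_bigr (fun m : 'I_n.+1 => u n m - u n m.+1)); last first.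
  by move=> m _; rewrite U2.
rewrite sumrB big_ord_recl [X in _ - X]big_ord_recr /=.
rewrite (u_big (j := n) (m := n.+1)) // addr0 u_0.
rewrite (eq_bigr (fun m : 'I_n => u n m.+1)) //.
by rewrite addrK.
Qed.

Lemma bn0 n : b n 0 = 1.
Proof.
have E : T 1 (T (-1) (fun i => b i 0)) n = b n 0.
  by rewrite Tcomp subrr T0.
rewrite -E (@T_ext _ _ _ (fun i => (i == 0%N)%:R)); last by move=> i _; rewrite Tm1_b0.
by rewrite Tdelta expr1n.
Qed.

Definition Tx a (h : nat -> nat -> rat) j k := T a (fun i => h i k) j.
Definition Ty a (h : nat -> nat -> rat) j k := T a (h j) k.

Lemma Tgeom_nat (r k : nat) : T 1 (fun l => (r%:R : rat) ^+ l) k = (r.+1)%:R ^+ k.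
Proof. by rewrite Tgeom -mulrS. Qed.

Lemma Tsum_geom B k (c : nat -> rat) (rr : nat -> nat) :
  T 1 (fun l => \sum_(m < B) c m * (rr m)%:R ^+ l) k =
  \sum_(m < B) c m * (rr m).+1%:R ^+ k.
Proof.
rewrite T_sum; apply: eq_bigr => m _.
by rewrite T_scale Tgeom_nat.
Qed.

Lemma U5 j m : T 1 (fun i => u i.+1 m) j = m%:R * u j m.-1.
Proof.
rewrite (@T_ext _ _ _ (fun i => m%:R * T (-1) (fun i => u i m.-1) i)); last first.
  move=> i _; rewrite U4; case: m => [|m]; first by rewrite !mul0r.
  by rewrite U2.
by rewrite T_scale Tcomp subrr T0.
Qed.

Lemma sum7 (B : nat) (A Bf C D E F G : 'I_B -> rat) :
  \sum_(m < B) A m - \sum_(m < B) Bf m - 2 * \sum_(m < B) C m + \sum_(m < B) D m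
  + \sum_(m < B) E m - 2 * \sum_(m < B) F m + 2 * \sum_(m < B) G m
  = \sum_(m < B) (A m - Bf m - 2 * C m + D m + E m - 2 * F m + 2 * G m).
Proof. by rewrite !mulr_sumr -sumrB -sumrB -big_split -big_split -sumrB -big_split. Qed.

Lemma Zzero j k :
  Tx 1 (Ty 1 (fun j k => b j.+1 k)) j k - Ty 1 (fun j k => b j.+1 k) j k
  - 2 * b j.+1 k + Ty 1 b j k + Ty 1 (fun j k => b j k.+1) j k
  - 2 * b j k.+1 + 2 * b j k = 0.
Proof.
have e1 : Ty 1 b j k = \sum_(m < j.+3) u j m * (m.+2)%:R ^+ k.
  rewrite /Ty (@T_ext _ _ _ (fun l => \sum_(m < j.+3) u j m * (m.+1)%:R ^+ l)).
    by rewrite Tsum_geom.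
  by move=> l _; rewrite (@b_ext _ _ j.+3) //; lia.
have e2 : forall i, (i <= j)%N -> Ty 1 (fun j k => b j.+1 k) i k =
     \sum_(m < j.+3) u i.+1 m * (m.+2)%:R ^+ k.
  move=> i hi.
  rewrite /Ty (@T_ext _ _ _ (fun l => \sum_(m < j.+3) u i.+1 m * (m.+1)%:R ^+ l)).
    by rewrite Tsum_geom.
  by move=> l _; rewrite (@b_ext _ _ j.+3) //; lia.
have e3 : Ty 1 (fun j k => b j k.+1) j k =
     \sum_(m < j.+3) (u j m * (m.+1)%:R) * (m.+2)%:R ^+ k.
  rewrite /Ty (@T_ext _ _ _
     (fun l => \sum_(m < j.+3) (u j m * (m.+1)%:R) * (m.+1)%:R ^+ l)).
    by rewrite (@Tsum_geom j.+3 k (fun m => u j m * (m.+1)%:R) (fun m => m.+1)).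
  move=> l _; rewrite (@b_ext _ _ j.+3); last lia.
  by apply: eq_bigr => m _; rewrite exprS; ring.
have e4 : Tx 1 (Ty 1 (fun j k => b j.+1 k)) j k =
     \sum_(m < j.+3) (m.+2)%:R ^+ k * (m%:R * u j m.-1).
  rewrite /Tx (@T_ext _ _ _ (fun i => \sum_(m < j.+3) u i.+1 m * (m.+2)%:R ^+ k)).
    rewrite T_sum; apply: eq_bigr => m _.
    rewrite (@T_ext _ _ _ (fun i => (m.+2)%:R ^+ k * u i.+1 m)).
      by rewrite T_scale U5.
    by move=> i _; rewrite mulrC.
  by move=> i hi; rewrite e2.
have e5 : b j.+1 k = \sum_(m < j.+3) u j.+1 m * (m.+1)%:R ^+ k by rewrite (@b_ext _ _ j.+3) //; lia.
have e6 : b j k.+1 = \sum_(m < j.+3) u j m * (m.+1)%:R ^+ k.+1 by rewrite (@b_ext _ _ j.+3) //; lia.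
have e7 : b j k = \sum_(m < j.+3) u j m * (m.+1)%:R ^+ k by rewrite (@b_ext _ _ j.+3) //; lia.
rewrite e4 (e2 j (leqnn j)) e5 e1 e3 e6 e7 sum7.
pose g (m : nat) : rat := 2 * m%:R * u j m.-1 * (m.+1)%:R ^+ k.
rewrite (eq_bigr (fun m : 'I_j.+3 => g m.+1 - g m)); last first.
  move=> m _; rewrite /g /= !U4.
  case: (nat_of_ord m) => [|m'] /=.
    rewrite !expr1n; ring.
  rewrite !exprS; ring.
rewrite -(big_mkord xpredT (fun m => g m.+1 - g m)) telescope_sumr //.
by rewrite /g /= u_big // mulr0 mul0r mulr0 !mul0r subrr.
Qed.


Definition Lam (h : nat -> nat -> rat) n := \sum_(k < n.+1) h (n - k)%N k.
Definition I (h : nat -> nat -> rat) n := if n is n'.+1 then Lam h n' else 0.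

Lemma I_ext h1 h2 n : (forall j k, h1 j k = h2 j k) -> I h1 n = I h2 n.
Proof. by move=> H; case: n => //= n; apply: eq_bigr => k _; rewrite H. Qed.

Lemma I_add h1 h2 n : I (fun j k => h1 j k + h2 j k) n = I h1 n + I h2 n.
Proof. by case: n => [|n] /=; [rewrite addr0 | rewrite /Lam big_split]. Qed.

Lemma I_scale c h n : I (fun j k => c * h j k) n = c * I h n.
Proof. by case: n => [|n] /=; [rewrite mulr0 | rewrite /Lam mulr_sumr]. Qed.

Lemma I_sub h1 h2 n : I (fun j k => h1 j k - h2 j k) n = I h1 n - I h2 n.
Proof. by case: n => [|n] /=; [rewrite subr0 | rewrite /Lam sumrB]. Qed.

Lemma Lam_dy h n : Lam h n = h n 0%N + I (fun j k => h j k.+1) n.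
Proof.
case: n => [|n]; first by rewrite /Lam big_ord_recl big_ord0 /= addr0.
rewrite /Lam big_ord_recl; congr (_ + _).
Qed.

Lemma dyM h j k : Tx 1 (Ty 1 h) j k.+1 =
  Tx 1 (Ty 1 h) j k + Tx 1 (Ty 1 (fun j k => h j k.+1)) j k.
Proof.
rewrite /Tx -T_add; apply: T_ext => i _; by rewrite /Ty TS mul1r.
Qed.

Lemma I_M h n : I (Tx 1 (Ty 1 h)) n = T 1 (I h) n.
Proof.
elim: n h => [|n IH] h; first by rewrite T_0n.
rewrite TS mul1r.
have E1 : I (Tx 1 (Ty 1 h)) n.+1 = Tx 1 (Ty 1 h) n 0%N
    + I (fun j k => Tx 1 (Ty 1 h) j k.+1) n by exact: Lam_dy.
have E2 : T 1 (fun i => I h i.+1) n =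
    T 1 (fun i => h i 0%N) n + T 1 (I (fun j k => h j k.+1)) n.
  by rewrite -T_add; apply: T_ext => i _; exact: Lam_dy.
rewrite E1 E2 (@I_ext _ _ n (dyM h)) I_add !IH.
have -> : Tx 1 (Ty 1 h) n 0 = T 1 (fun i => h i 0%N) n.
  by rewrite /Tx; apply: T_ext => i _; rewrite /Ty T_0n.
ring.
Qed.

Lemma I_tele h n : I (fun j k => h j.+1 k - h j k.+1) n.+1 = h n.+1 0%N - h 0%N n.+1.
Proof.
rewrite /= /Lam.
pose g k := h (n.+1 - k)%N k.
rewrite (eq_bigr (fun k : 'I_n.+1 => - (g k.+1 - g k))); last first.
  move=> k _; rewrite /g subSS subSn; last by rewrite -ltnS.
  by rewrite opprB.
rewrite sumrN -(big_mkord xpredT (fun k => g k.+1 - g k)) telescope_sumr //.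
by rewrite /g subn0 subnn opprB.
Qed.

Definition Sb n := Lam b n.

Definition Phi j k := Tx 1 (Ty 1 b) j k - Ty 1 b j k - 2 * b j k.

Lemma Zid j k : 4 * b j k.+1 - Tx 1 (Ty 1 (fun j k => b j k.+1)) j k - 2 * b j k
  = Phi j.+1 k - Phi j k.+1.
Proof.
have Z := Zzero j k.
have h1 : Tx 1 (Ty 1 b) j.+1 k = Tx 1 (Ty 1 b) j k + Tx 1 (Ty 1 (fun j k => b j.+1 k)) j k.
  by rewrite /Tx TS mul1r.
have h2 := dyM b j k.
have h3 : Ty 1 b j.+1 k = Ty 1 (fun j k => b j.+1 k) j k by [].
have h4 : Ty 1 b j k.+1 = Ty 1 b j k + Ty 1 (fun j k => b j k.+1) j k.
  by rewrite /Ty TS mul1r.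
rewrite /Phi h1 h2 h3 h4.
lra.
Qed.

Lemma Phi_n0 n : Phi n 0%N = 2 ^+ n - 3.
Proof.
rewrite /Phi /Ty T_0n bn0.
have -> : Tx 1 (Ty 1 b) n 0%N = 2 ^+ n.
  rewrite /Tx (@T_ext _ _ _ (fun i => 1 ^+ i)); first by rewrite Tgeom.
  by move=> i _; rewrite /Ty T_0n bn0 expr1n.
ring.
Qed.

Lemma Phi_0n n : Phi 0%N n = - 2.
Proof. by rewrite /Phi /Tx T_0n b0k; ring. Qed.

Lemma Sb_rec n :
  4 * Sb n = (if n is m.+1 then 2 * Sb m else 0) + T 1 Sb n + 3.
Proof.
have S1 : forall i, Sb i = 1 + I (fun j k => b j k.+1) i.
  by move=> i; rewrite /Sb Lam_dy bn0.
have hT : T 1 Sb n = 2 ^+ n + I (Tx 1 (Ty 1 (fun j k => b j k.+1))) n.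
  rewrite (@T_ext _ _ _ (fun i => 1 ^+ i + I (fun j k => b j k.+1) i)); last first.
    by move=> i _; rewrite S1 expr1n.
  by rewrite T_add Tgeom I_M.
have hI : (if n is m.+1 then 2 * Sb m else 0) = 2 * I b n by case: n {S1 hT}.
have K : I (fun j k => 4 * b j k.+1 - Tx 1 (Ty 1 (fun j k => b j k.+1)) j k - 2 * b j k) n
       = I (fun j k => Phi j.+1 k - Phi j k.+1) n.
  by apply: I_ext => j k; rewrite Zid.
have K1 : I (fun j k => 4 * b j k.+1 - Tx 1 (Ty 1 (fun j k => b j k.+1)) j k - 2 * b j k) n
   = 4 * I (fun j k => b j k.+1) n - I (Tx 1 (Ty 1 (fun j k => b j k.+1))) n - 2 * I b n.
  by rewrite !I_sub !I_scale.
have K2 : I (fun j k => Phi j.+1 k - Phi j k.+1) n =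
   (if n is m.+1 then Phi n 0%N - Phi 0%N n else 0).
  by case: n {S1 hT hI K K1} => [|n] //; rewrite I_tele.
rewrite K1 K2 in K.
rewrite hT hI S1.
case: n K {S1 hT hI K1 K2} => [|n] K.
  rewrite /= expr0; lra.
rewrite Phi_n0 Phi_0n in K.
lra.
Qed.


Lemma T1_split (s : nat -> rat) n :
  T 1 s n = s n + \sum_(i < n) ('C(n, i))%:R * s i.
Proof.
rewrite /T big_ord_recr /= binn subnn expr0 !mul1r addrC; congr (_ + _).
by apply: eq_bigr => i _; rewrite expr1n mulr1.
Qed.

Lemma Rrec_uniq (s t : nat -> rat) :
  (forall n, 4 * s n = (if n is m.+1 then 2 * s m else 0) + T 1 s n + 3) ->
  (forall n, 4 * t n = (if n is m.+1 then 2 * t m else 0) + T 1 t n + 3) ->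
  forall n, s n = t n.
Proof.
move=> Hs Ht n; elim: n {-2}n (leqnn n) => [|N IH] n hn.
  have -> : n = 0%N by apply/eqP; rewrite -leqn0.
  have := Hs 0%N; have := Ht 0%N; rewrite !T1_split !big_ord0 /=; lra.
case: (leqP n N) => hnN; first exact: IH.
have -> : n = N.+1 by apply/eqP; rewrite eqn_leq hn hnN.
have hsum : \sum_(i < N.+1) ('C(N.+1, i))%:R * s i = \sum_(i < N.+1) ('C(N.+1, i))%:R * t i.
  by apply: eq_bigr => i _; rewrite IH // -ltnS.
have eN := IH N (leqnn N).
have := Hs N.+1; have := Ht N.+1; rewrite !T1_split hsum eN; lra.
Qed.

Lemma pB_b n k : polyBernoulli n (- (Posz k)) = b n k.
Proof.
rewrite /polyBernoulli opprK big_add1 /= big_mkord mulr_sumr /b.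
apply: eq_bigr => m _; rewrite -exprnP /u mulrA.
by [].
Qed.

Unset Implicit Arguments.
Theorem theorem3p5 (n : nat) :
  (2 / 3 : rat) ^+ n * (pol_p n).[1 / 4] =
  \sum_(0 <= k < n.+1) polyBernoulli (n - k) (- (Posz k)).
Proof.
have -> : \sum_(0 <= k < n.+1) polyBernoulli (n - k) (- (Posz k)) = Sb n.
  rewrite big_mkord /Sb /Lam; apply: eq_bigr => k _; exact: pB_b.
have -> : (2 / 3 : rat) ^+ n * (pol_p n).[1 / 4] = tA n by [].
exact: (Rrec_uniq tA_rec Sb_rec).
Qed.
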